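(* Let $D$ be a regular $(v,k,\lambda,\mu)$-PDS in a finite group $G$ with $0<\mu<k$ and $\sqrt\Delta\in\mathbb{Z}$. If $p$ is a prime and $p^\ell$ divides both $\theta_1$ and $\theta_2$, then $k\equiv0\pmod{p^\ell}$. In particular $k\equiv0\pmod{\gcd(\theta_1,\theta_2)}$.
   Context: A $(v,k,\lambda,\mu)$-PDS in a group $G$ of order $v$ is a $k$-subset $D$ such that every nonidentity element of $D$ is $xy^{-1}$ ($x,y\in D$) in exactly $\lambda$ ways and every nonidentity element of $G\setminus D$ in exactly $\mu$ ways; regular means $D=D^{(-1)}$ and $1\notin D$. $\Delta=(\lambda-\mu)^2+4(k-\mu)$, $\theta_{1,2}=\frac12(\lambda-\mu\pm\sqrt\Delta)$. *)

(* Defs.v *)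
From HB Require Import structures.
From mathcomp Require Import all_boot all_order all_algebra all_fingroup.
Set Implicit Arguments. Unset Strict Implicit. Unset Printing Implicit Defensive.
Import Order.TTheory GRing.Theory Num.Theory.

Local Open Scope group_scope.

Definition nreps (gT : finGroupType) (D : {set gT}) (g : gT) : nat :=
  #|[set xy in setX D D | xy.1 * xy.2^-1 == g]|.

Definition is_PDS (gT : finGroupType) (G : {group gT}) (D : {set gT})
  (v k lam mu : nat) : Prop :=
  [/\ D \subset G, #|G| = v, #|D| = k,
      (forall g, g \in D -> g != 1 -> nreps D g = lam) &
      (forall g, g \in G :\: D -> g != 1 -> nreps D g = mu)].

Definition is_regular_PDS (gT : finGroupType) (G : {group gT}) (D : {set gT})
  (v k lam mu : nat) : Prop :=
  [/\ is_PDS G D v k lam mu, D^-1 = D & 1 \notin D].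

Local Open Scope ring_scope.

Definition PDS_Delta (k lam mu : nat) : int :=
  (lam%:Z - mu%:Z) ^+ 2 + 4 * (k%:Z - mu%:Z).

(* theta_{1,2} = (lambda - mu +/- s)/2 where s = sqrt Delta (a nonnegative
   integer).  When s^2 = Delta, lambda - mu +/- s is even, so the division is exact. *)
Definition PDS_theta1 (lam mu s : nat) : int := ((lam%:Z - mu%:Z + s%:Z) %/ 2)%Z.
Definition PDS_theta2 (lam mu s : nat) : int := ((lam%:Z - mu%:Z - s%:Z) %/ 2)%Z.

(* Main.v *)
Require Import Defs.
From HB Require Import structures.
From mathcomp Require Import all_boot all_order all_algebra all_fingroup.
Set Warnings "-notation-overridden,-ambiguous-paths".
From mathcomp Require Import zify ring lra.
Import Order.TTheory GRing.Theory Num.Theory.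
Local Open Scope ring_scope.

Lemma tr_pid (F : fieldType) n r : (r <= n)%N -> \tr (pid_mx r : 'M[F]_n) = r%:R.
Proof.
move=> rn; rewrite /mxtrace (eq_bigr (fun i : 'I_n => ((i < r)%N)%:R)); last first.
  by move=> i _; rewrite mxE eqxx.
rewrite -natr_sum; congr (_ %:R).
rewrite -(big_mkord predT (fun i => nat_of_bool (i < r)%N)).
rewrite (big_cat_nat (leq0n r) rn) /=.
rewrite [X in (_ + X)%N]big_nat_cond [X in (_ + X)%N]big1 ?addn0; last first.
  by move=> i /andP[/andP[ri _] _]; rewrite ltnNge ri.
rewrite big_nat_cond (eq_bigr (fun _ => 1%N)); last by move=> i /andP[/andP[_ ->]].
by rewrite -big_nat_cond sum_nat_const_nat subn0 muln1.
Qed.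

Lemma tr_idem (F : fieldType) n (E : 'M[F]_n) : E *m E = E -> \tr E = (\rank E)%:R.
Proof.
move=> EE.
have rn : (\rank E <= n)%N by apply: rank_leq_col.
set L := col_ebase E; set P := pid_mx (\rank E) : 'M[F]_n; set U := row_ebase E.
have dE : L *m P *m U = E by apply: mulmx_ebase.
have uL : L \in unitmx by apply: col_ebase_unit.
have uU : U \in unitmx by apply: row_ebase_unit.
have PP : P *m P = P by apply: pid_mx_id.
have key : P *m (U *m L) *m P = P.
  have h : L *m (P *m (U *m L) *m P) *m U = L *m P *m U.
    by rewrite dE -EE -dE !mulmxA.
  have h2 := congr1 (fun X => invmx L *m (X *m invmx U)) h.
  by move: h2; rewrite /= !mulmxK // -!mulmxA !mulKmx.
suff -> : \tr E = \tr P by rewrite tr_pid.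
rewrite -dE -mulmxA mxtrace_mulC -{1}PP.
have -> : P *m P *m U *m L = P *m (P *m (U *m L)) by rewrite !mulmxA.
by rewrite mxtrace_mulC key.
Qed.

Lemma idemE (F : fieldType) n (M J : 'M[F]_n) (t1 t2 k mu v : F) :
  M *m M = (t1 + t2) *: M - (t1 * t2) *: 1%:M + mu *: J ->
  M *m J = k *: J -> J *m M = k *: J -> J *m J = v *: J ->
  mu != 0 -> v = (k - t1) * (k - t2) / mu -> t1 != t2 -> t1 != k ->
  let E := (t1 - t2)^-1 *: (M - t2 *: 1%:M) + (mu / ((t1 - t2) * (t1 - k))) *: J in
  E *m E = E.
Proof.
move=> MM MJ JM JJ mu0 hv t12 t1k E.
have s0 : t1 - t2 != 0 by rewrite subr_eq0.
have k0 : t1 - k != 0 by rewrite subr_eq0.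
rewrite /E !scalemx1 !(mulmxDl, mulmxDr, mulmxBl, mulmxBr, mul1mx, mulmx1, mulmxN, mulNmx, mul_mx_scalar, mul_scalar_mx, =^~ scalemxAl, =^~ scalemxAr) MM MJ JM JJ.
apply/matrixP => i j; rewrite !mxE hv; case: (i == j); rewrite ?mulr1n ?mulr0n.
all: field.
all: by rewrite s0 k0 mu0.
Qed.

Lemma two_dvd (a s c : int) : s ^+ 2 = a ^+ 2 + 4 * c -> (2 %| a + s)%Z.
Proof.
move=> h; apply/dvdz_mod0P.
have e := divz_eq (a + s) 2.
have r0 : 0 <= ((a + s) %% 2)%Z by apply: modz_ge0.
have r2 : ((a + s) %% 2)%Z < 2 by apply: ltz_pmod.
move: e r0 r2; set q := ((a + s) %/ 2)%Z; set r := ((a + s) %% 2)%Z => e r0 r2.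
have es : s = q * 2 + r - a by rewrite -e; ring.
rewrite es in h.
have h2 : r * r - 2 * r * a + 4 * q * r + 4 * q * q - 4 * q * a - 4 * c = 0.
  by rewrite -(subrr (a ^+ 2 + 4 * c)) -{1}h; ring.
have [->|r1] : r = 0 \/ r = 1 by lia.
  by [].
rewrite r1 in h2.
lia.
Qed.

Section Grp.
Local Open Scope group_scope.
Lemma cnt1 (gT : finGroupType) (G : {group gT}) (D : {set gT}) g :
  D \subset G -> g \in G -> #|[set x in G | g * x^-1 \in D]| = #|D|.
Proof.
move=> sDG gG.
have -> : [set x in G | g * x^-1 \in D] = [set d^-1 * g | d in D].
  apply/setP => x; rewrite inE; apply/andP/imsetP.
    move=> [xG gxD]; exists (g * x^-1) => //.
    by rewrite invMg invgK mulgKV.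
  move=> [d dD ->]; split; first by rewrite groupM ?groupV // (subsetP sDG).
  by rewrite invMg invgK mulKVg.
rewrite card_imset // => d1 d2 /mulIg; exact: invg_inj.
Qed.

Lemma cnt2 (gT : finGroupType) (G : {group gT}) (D : {set gT}) h :
  D \subset G -> h \in G -> #|[set x in G | x * h^-1 \in D]| = #|D|.
Proof.
move=> sDG hG.
have -> : [set x in G | x * h^-1 \in D] = [set d * h | d in D].
  apply/setP => x; rewrite inE; apply/andP/imsetP.
    move=> [xG xhD]; exists (x * h^-1) => //.
    by rewrite mulgKV.
  move=> [d dD ->]; split; first by rewrite groupM // (subsetP sDG).
  by rewrite mulgK.
rewrite card_imset // => d1 d2; exact: mulIg.
Qed.

Lemma cnt3 (gT : finGroupType) (G : {group gT}) (D : {set gT}) g h :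
  D \subset G -> D^-1 = D -> g \in G -> h \in G ->
  #|[set x in G | (g * x^-1 \in D) && (x * h^-1 \in D)]| = nreps D (g * h^-1).
Proof.
move=> sDG Dinv gG hG.
have Dv : forall y, (y^-1 \in D) = (y \in D).
  by move=> y; rewrite -{2}Dinv inE.
rewrite /nreps.
have -> : [set xy in setX D D | xy.1 * xy.2^-1 == g * h^-1] =
   [set (g * x^-1, h * x^-1) | x in [set x in G | (g * x^-1 \in D) && (x * h^-1 \in D)]].
  apply/setP => [[d1 d2]]; rewrite inE /=; apply/andP/imsetP.
    rewrite inE /= => [[/andP[d1D d2D] /eqP e]].
    exists (d1^-1 * g).
      have d1G : d1 \in G := subsetP sDG d1 d1D.
      rewrite inE groupM ?groupV // /= invMg invgK mulKVg d1D /=.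
      have -> : d1^-1 * g * h^-1 = d2^-1.
        by rewrite -mulgA -e mulgA mulVg mul1g.
      by rewrite Dv.
    rewrite invMg invgK mulKVg; congr (_, _).
    have e' : d2 = (d1^-1 * (g * h^-1))^-1 by rewrite -e mulKg invgK.
    by rewrite e' !invMg !invgK mulgA.
  move=> [x]; rewrite inE => /andP[xG /andP[gxD xhD]] [-> ->].
  rewrite inE /= gxD /= -Dv invMg invgK xhD; split => //.
  by rewrite mulgA mulgKV.
rewrite card_imset // => x1 x2 [e _]; move: e.
by move/mulgI/invg_inj.
Qed.

Lemma nreps1 (gT : finGroupType) (D : {set gT}) : nreps D 1 = #|D|.
Proof.
rewrite /nreps.
have -> : [set xy in setX D D | xy.1 * xy.2^-1 == 1] = [set (d, d) | d in D].
  apply/setP => [[d1 d2]]; rewrite inE /=; apply/andP/imsetP.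
    rewrite inE /= -eq_mulgV1 => [[/andP[d1D d2D] /eqP e]].
    by exists d1 => //; rewrite e.
  move=> [d dD [-> ->]]; by rewrite inE /= dD mulgV.
by rewrite card_imset // => x y [].
Qed.
End Grp.

Lemma sum_ind (T : finType) (A : {set T}) (P : pred T) :
  \sum_(x in A) ((P x)%:R : rat) = (#|[set x in A | P x]|)%:R.
Proof.
rewrite -natr_sum -sum1_card; congr (_ %:R).
rewrite big_mkcond /= [RHS]big_mkcond /=; apply: eq_bigr => x _.
by rewrite inE; case: (x \in A); case: (P x).
Qed.

Lemma natb_mul (b1 b2 : bool) : (b1%:R * b2%:R : rat) = (b1 && b2)%:R.
Proof. by case: b1; case: b2; rewrite ?mulr1 ?mulr0 ?mul0r. Qed.

Theorem mainTheorem17 (gT : finGroupType) (G : {group gT}) (D : {set gT})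
  (v k lam mu s : nat) :
  is_regular_PDS G D v k lam mu ->
  (0 < mu)%N -> (mu < k)%N ->
  (s%:Z) ^+ 2 = PDS_Delta k lam mu ->
  (forall (p l : nat), prime p ->
     (((p ^ l)%N)%:Z %| PDS_theta1 lam mu s)%Z ->
     (((p ^ l)%N)%:Z %| PDS_theta2 lam mu s)%Z ->
     (p ^ l %| k)%N)
  /\ (gcdz (PDS_theta1 lam mu s) (PDS_theta2 lam mu s) %| k%:Z)%Z.
Proof.
move=> [[sDG cG cD Hl Hm] Dinv D1] mu0 muk hs.
pose a := fun i : 'I_#|G| => (enum_val i : gT).
have aG : forall i, a i \in G by move=> i; exact: enum_valP.
have ainj : injective a by exact: enum_val_inj.
pose M : 'M[rat]_#|G| := \matrix_(i, j) (((a i * (a j)^-1)%g \in D)%:R).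
pose J : 'M[rat]_#|G| := const_mx 1.
have sumG : forall F : gT -> rat, \sum_(l < #|G|) F (a l) = \sum_(x in G) F x.
  by move=> F; rewrite (big_enum_val F).
have trM : \tr M = 0.
  by rewrite /mxtrace big1 // => i _; rewrite mxE mulgV (negbTE D1).
have trJ : \tr J = #|G|%:R.
  rewrite /mxtrace (eq_bigr (fun _ => 1)); last by move=> i _; rewrite mxE.
  by rewrite sumr_const card_ord.
have MJ : M *m J = k%:R *: J.
  apply/matrixP => i j; rewrite !mxE.
  rewrite (eq_bigr (fun l => (((a i * (a l)^-1)%g \in D)%:R))); last first.
    by move=> l _; rewrite !mxE mulr1.
  rewrite (sumG (fun x => (((a i * x^-1)%g \in D)%:R))) sum_ind cnt1 // cD mulr1 //.
have JM : J *m M = k%:R *: J.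
  apply/matrixP => i j; rewrite !mxE.
  rewrite (eq_bigr (fun l => (((a l * (a j)^-1)%g \in D)%:R))); last first.
    by move=> l _; rewrite !mxE mul1r.
  rewrite (sumG (fun x => (((x * (a j)^-1)%g \in D)%:R))) sum_ind cnt2 // cD mulr1 //.
have JJ : J *m J = (#|G|%:R : rat) *: J.
  apply/matrixP => i j; rewrite !mxE.
  rewrite (eq_bigr (fun _ => 1)); last by move=> l _; rewrite !mxE mulr1.
  by rewrite sumr_const card_ord mulr1.
have Dv : forall y, ((y^-1)%g \in D) = (y \in D).
  by move=> y; rewrite -{2}Dinv inE.
have MM : M *m M = (lam%:R - mu%:R) *: M + (k%:R - mu%:R) *: 1%:M + (mu%:R : rat) *: J.
  apply/matrixP => i j; rewrite !mxE.
  rewrite (eq_bigr (fun l => (((a i * (a l)^-1)%g \in D) && ((a l * (a j)^-1)%g \in D))%:R)); last first.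
    by move=> l _; rewrite !mxE natb_mul.
  rewrite (sumG (fun x => (((a i * x^-1)%g \in D) && ((x * (a j)^-1)%g \in D))%:R)) sum_ind.
  rewrite (@cnt3 _ G D _ _ sDG Dinv (aG i) (aG j)).
  have gG : (a i * (a j)^-1)%g \in G by rewrite groupM ?groupV.
  case: (eqVneq i j) => [<-|ij].
    by rewrite mulgV nreps1 cD (negbTE D1) mulr0 add0r !mulr1 subrK.
  have g1 : (a i * (a j)^-1)%g != 1%g.
    by rewrite -eq_mulgV1; apply: contra ij => /eqP /ainj ->.
  rewrite mulr0 addr0 mulr1.
  case: (boolP ((a i * (a j)^-1)%g \in D)) => gD.
    by rewrite Hl // mulr1 subrK.
  by rewrite Hm ?inE ?gD ?gG // mulr0 add0r.
set th1 := PDS_theta1 lam mu s; set th2 := PDS_theta2 lam mu s.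
have hD : s%:Z ^+ 2 = (lam%:Z - mu%:Z) ^+ 2 + 4 * (k%:Z - mu%:Z) by exact: hs.
have dv1 : (2 %| lam%:Z - mu%:Z + s%:Z)%Z := two_dvd _ _ _ hD.
have dv2 : (2 %| lam%:Z - mu%:Z - s%:Z)%Z.
  have -> : lam%:Z - mu%:Z - s%:Z = (lam%:Z - mu%:Z + s%:Z) - s%:Z * 2 by ring.
  by rewrite rpredB // dvdz_mull.
have e1 : th1 * 2 = lam%:Z - mu%:Z + s%:Z := divzK dv1.
have e2 : th2 * 2 = lam%:Z - mu%:Z - s%:Z := divzK dv2.
have esum : th1 + th2 = lam%:Z - mu%:Z by lia.
have edif : th1 - th2 = s%:Z by lia.
have eprod : th1 * th2 = mu%:Z - k%:Z.
  have h4 : (th1 * 2) * (th2 * 2) = (lam%:Z - mu%:Z + s%:Z) * (lam%:Z - mu%:Z - s%:Z) by rewrite e1 e2.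
  have h5 : (lam%:Z - mu%:Z + s%:Z) * (lam%:Z - mu%:Z - s%:Z) = (lam%:Z - mu%:Z) ^+ 2 - s%:Z ^+ 2 by ring.
  rewrite h5 hD in h4.
  have h6 : (th1 * th2) * 4 = (mu%:Z - k%:Z) * 4.
    have -> : th1 * th2 * 4 = (th1 * 2) * (th2 * 2) by ring.
    rewrite h4; lia.
  lia.
have s0 : (0 < s)%N.
  rewrite lt0n; apply/eqP => s0; move: hD; rewrite s0.
  have : 0 <= (lam%:Z - mu%:Z) ^+ 2 by apply: sqr_ge0.
  lia.
pose T1 : rat := th1%:~R; pose T2 : rat := th2%:~R.
have sT : T1 + T2 = lam%:R - mu%:R by rewrite -intrD esum intrB.
have dT : T1 - T2 = s%:R by rewrite -intrB edif.
have pT : T1 * T2 = mu%:R - k%:R by rewrite -intrM eprod intrB.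
pose nT : rat := #|G|%:R.
pose i0 : 'I_#|G| := Ordinal (cardG_gt0 G).
have cmv : (k%:R - T1) * (k%:R - T2) = mu%:R * nT.
  have h : (M *m M) *m J = M *m (M *m J) by rewrite mulmxA.
  rewrite MM MJ -scalemxAr MJ !mulmxDl -!scalemxAl MJ mul1mx JJ in h.
  have := congr1 (fun X : 'M[rat]_#|G| => X i0 i0) h; rewrite !mxE /= !mulr1 => h2.
  have -> : (k%:R - T1) * (k%:R - T2) = k%:R * k%:R - (T1 + T2) * k%:R + T1 * T2 by ring.
  rewrite sT pT -h2 /nT; ring.
have mu0' : (mu%:R : rat) != 0 by rewrite pnatr_eq0 -lt0n.
have nT0 : nT != 0 by rewrite /nT pnatr_eq0 -lt0n cardG_gt0.
have hv : nT = (k%:R - T1) * (k%:R - T2) / mu%:R by rewrite cmv mulrC mulKf.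
have T12 : T1 != T2 by rewrite -subr_eq0 dT pnatr_eq0 -lt0n.
have cm0 : (k%:R - T1) * (k%:R - T2) != 0 by rewrite cmv mulf_neq0.
have T1k : T1 != k%:R.
  by apply: contraNneq cm0 => ->; rewrite subrr mul0r.
have T2k : T2 != k%:R.
  by apply: contraNneq cm0 => ->; rewrite subrr mulr0.
have MM1 : M *m M = (T1 + T2) *: M - (T1 * T2) *: 1%:M + (mu%:R : rat) *: J.
  by rewrite MM sT pT -scaleNr opprB.
have MM2 : M *m M = (T2 + T1) *: M - (T2 * T1) *: 1%:M + (mu%:R : rat) *: J.
  by rewrite [T2 + T1]addrC [T2 * T1]mulrC.
have hv2 : nT = (k%:R - T2) * (k%:R - T1) / mu%:R by rewrite hv [(_ - T1) * _]mulrC.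
have T21 : T2 != T1 by rewrite eq_sym.
have E1i := @idemE _ _ M J T1 T2 k%:R mu%:R nT MM1 MJ JM JJ mu0' hv T12 T1k.
have E2i := @idemE _ _ M J T2 T1 k%:R mu%:R nT MM2 MJ JM JJ mu0' hv2 T21 T2k.
move: E1i E2i => /=.
set E1 := (_ + _ *: J); set E2 := (_ + _ *: J) => E1i E2i.
have tE1 := tr_idem _ _ _ E1i; have tE2 := tr_idem _ _ _ E2i.
rewrite {1}/E1 -scaleNr mxtraceD !mxtraceZ mxtraceD mxtraceZ trM trJ mxtrace1 in tE1.
rewrite {1}/E2 -scaleNr mxtraceD !mxtraceZ mxtraceD mxtraceZ trM trJ mxtrace1 in tE2.
move: tE1 tE2; set r1 := \rank E1; set r2 := \rank E2 => tE1 tE2.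
have key : k%:R + T1 * r1%:R + T2 * r2%:R = 0.
  rewrite -tE1 -tE2.
  have k1 : T1 - k%:R != 0 by rewrite subr_eq0.
  have k2 : T2 - k%:R != 0 by rewrite subr_eq0.
  have s1 : T1 - T2 != 0 by rewrite subr_eq0.
  have s2 : T2 - T1 != 0 by rewrite subr_eq0.
  have hv' : (#|G|%:R : rat) = (k%:R - T1) * (k%:R - T2) / mu%:R := hv.
  rewrite hv'; field.
  by rewrite k1 k2 s1 s2 mu0'.
have kint : k%:Z = - (th1 * r1%:Z + th2 * r2%:Z).
  apply/eqP; rewrite -subr_eq0 opprK -(intr_eq0 rat) !rmorphD !rmorphM /=.
  by rewrite -[(k%:Z)%:~R]pmulrn -[(r1%:Z)%:~R]pmulrn -[(r2%:Z)%:~R]pmulrn addrA key.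
split.
  move=> p l _ h1 h2.
  have : (((p ^ l)%N)%:Z %| k%:Z)%Z.
    by rewrite kint rpredN rpredD // dvdz_mulr.
  by rewrite dvdzE.
by rewrite kint rpredN rpredD // dvdz_mulr // ?dvdz_gcdl ?dvdz_gcdr.
Qed.
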